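(* Let $\mathcal{A}\subseteq\mathbb{R}^3$, $K\ge2$, $P_1,\ldots,P_K>0$, $\sigma^2>0$, and $h_1,\ldots,h_K\in L^2(\mathcal{A})$ with positive definite Gram matrix $\mathbf{R}$, $[\mathbf{R}]_{k_1,k_2}=\int_{\mathcal{A}}h_{k_1}^{*}h_{k_2}\,\mathrm{d}\mathbf{r}$. Fix $k$, let $\mathbf{h}_{\setminus k}(\mathbf{r})=[h_{k'}(\mathbf{r})]_{k'\neq k}\in\mathbb{C}^{1\times(K-1)}$, $\mathbf{R}_k=\int_{\mathcal{A}}\mathbf{h}_{\setminus k}^{\mathsf{H}}\mathbf{h}_{\setminus k}\,\mathrm{d}\mathbf{r}$, $\mathbf{P}_k=\mathrm{diag}(P_{k'}/\sigma^2)_{k'\neq k}$, and $\mathbf{C}_k=\mathbf{P}_k^{1/2}\mathbf{R}_k\mathbf{P}_k^{1/2}$ with eigendecomposition $\mathbf{C}_k=\mathbf{U}_k\,\mathrm{diag}(\lambda_{k'})_{k'\neq k}\mathbf{U}_k^{\mathsf{H}}$, $\lambda_{k'}>0$. Let $\mathbf{B}_k=\mathbf{U}_k\,\mathrm{diag}\big(\tfrac{1+\sqrt{1+\lambda_{k'}}}{\lambda_{k'}}\big)\mathbf{U}_k^{\mathsf{H}}$ and let $B_k$ be the operator on $L^2(\mathcal{A})$ with kernel $\delta(\mathbf{r}-\mathbf{r}')-\mathbf{h}_{\setminus k}(\mathbf{r})\mathbf{P}_k^{1/2}\mathbf{B}_k\mathbf{P}_k^{1/2}\mathbf{h}_{\setminus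 k}^{\mathsf{H}}(\mathbf{r}')$. For $w_k\in L^2(\mathcal{A})$ define $$f_{\mathsf{dm}}(w_k)=\iint_{\mathcal{A}^2}w_k^{*}(\mathbf{r})C_k(\mathbf{r},\mathbf{r}')w_k(\mathbf{r}')\,\mathrm{d}\mathbf{r}'\mathrm{d}\mathbf{r},\qquad C_k(\mathbf{r},\mathbf{r}')=\delta(\mathbf{r}-\mathbf{r}')+\sum_{k'\neq k}\frac{P_{k'}}{\sigma^2}h_{k'}(\mathbf{r})h_{k'}^{*}(\mathbf{r}'),$$ that is, $f_{\mathsf{dm}}(w_k)=\int_{\mathcal{A}}|w_k|^2\,\mathrm{d}\mathbf{r}+\sum_{k'\neq k}\frac{P_{k'}}{\sigma^2}\big|\int_{\mathcal{A}}h_{k'}^*w_k\,\mathrm{d}\mathbf{r}\big|^2$, and let $u_k(\mathbf{r})=\int_{\mathcal{A}}B_k(\mathbf{r},\mathbf{r}')w_k(\mathbf{r}')\,\mathrm{d}\mathbf{r}'$. Then $f_{\mathsf{dm}}(w_k)=\int_{\mathcal{A}}|u_k(\mathbf{r})|^2\,\mathrm{d}\mathbf{r}$.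
   Context: Kernels containing $\delta(\mathbf{r}-\mathbf{r}')$ denote the identity plus a finite-rank integral operator. Standing assumption: channel responses pairwise non-parallel and $\mathbf{R}$ positive definite. *)

(* Defs.v *)
From HB Require Import structures.
From mathcomp Require Import all_boot all_order all_algebra.
From mathcomp Require Import all_classical all_reals all_analysis.
From mathcomp Require Import complex.
Set Implicit Arguments. Unset Strict Implicit. Unset Printing Implicit Defensive.
Import Order.TTheory GRing.Theory Num.Theory.
Local Open Scope ring_scope.
Local Open Scope classical_set_scope.

Definition R3 (R : realType) := ((R * R) * R)%type.

Definition leb3 (R : realType) :=
  (((@lebesgue_measure R) \x (@lebesgue_measure R)) \x (@lebesgue_measure R))%E.

Definition sqmod (R : realType) (z : R[i]) : R := complex.Re z ^+ 2 + complex.Im z ^+ 2.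

Definition ctrmx (R : realType) m n (M : 'M[R[i]]_(m, n)) : 'M[R[i]]_(n, m) :=
  map_mx (@Num.conj R[i]) M^T.

Definition L2 (R : realType) (A : set (R3 R)) (f : R3 R -> R[i]) : Prop :=
  measurable_fun A (fun x => complex.Re (f x)) /\
  measurable_fun A (fun x => complex.Im (f x)) /\
  (@leb3 R).-integrable A (fun x => (sqmod (f x))%:E).

Definition cint (R : realType) (A : set (R3 R)) (f : R3 R -> R[i]) : R[i] :=
  ((Rintegral (@leb3 R) A (fun x => complex.Re (f x))) +i*
   (Rintegral (@leb3 R) A (fun x => complex.Im (f x))))%C.

Definition sqnormL2 (R : realType) (A : set (R3 R)) (f : R3 R -> R[i]) : R :=
  Rintegral (@leb3 R) A (fun x => sqmod (f x)).

Definition ipL2 (R : realType) (A : set (R3 R)) (f g : R3 R -> R[i]) : R[i] :=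
  cint A (fun x => Num.conj (f x) * g x).

Local Open Scope complex_scope.
Local Open Scope ring_scope.

Section Channel.
Variables (R : realType) (A : set (R3 R)) (K : nat).
Variables (P : 'I_K -> R) (s2 : R) (h : 'I_K -> R3 R -> R[i]) (k : 'I_K).

Definition gram : 'M[R[i]]_K := \matrix_(i, j) ipL2 A (h i) (h j).

(** h_{\k}(r) = [h_{k'}(r)]_{k' <> k}, a 1 x (K-1) row vector; the indices
    k' <> k are enumerated in increasing order by [lift k : 'I_K.-1 -> 'I_K]. *)
Definition hmk (r : R3 R) : 'rV[R[i]]_K.-1 := \row_j h (lift k j) r.

Definition Rk : 'M[R[i]]_K.-1 :=
  \matrix_(i, j) ipL2 A (h (lift k i)) (h (lift k j)).

Definition Pkhalf : 'M[R[i]]_K.-1 :=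
  diag_mx (\row_j (Num.sqrt (P (lift k j) / s2))%:C).

Definition Ck : 'M[R[i]]_K.-1 := Pkhalf *m Rk *m Pkhalf.

Definition Bk (U : 'M[R[i]]_K.-1) (lam : 'I_K.-1 -> R) : 'M[R[i]]_K.-1 :=
  U *m diag_mx (\row_j ((1 + Num.sqrt (1 + lam j)) / lam j)%:C) *m ctrmx U.

Definition Bk_fr (U : 'M[R[i]]_K.-1) (lam : 'I_K.-1 -> R) (r r' : R3 R) : R[i] :=
  (hmk r *m Pkhalf *m Bk U lam *m Pkhalf *m ctrmx (hmk r')) 0 0.

(** u_k(r) = int_A B_k(r, r') w_k(r') dr', where the kernel
    delta(r - r') - Bk_fr r r' is the identity minus a finite-rank operator *)
Definition uk (U : 'M[R[i]]_K.-1) (lam : 'I_K.-1 -> R) (w : R3 R -> R[i])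
  (r : R3 R) : R[i] :=
  w r - cint A (fun r' => Bk_fr U lam r r' * w r').

Definition fdm (w : R3 R -> R[i]) : R :=
  sqnormL2 A w + \sum_(k' < K | k' != k) P k' / s2 * sqmod (ipL2 A (h k') w).

End Channel.

(* Main.v *)
Require Import Defs.
From HB Require Import structures.
From mathcomp Require Import all_boot all_order all_algebra.
From mathcomp Require Import all_classical all_reals all_analysis.
From mathcomp Require Import complex.
From mathcomp Require Import measurable_realfun.
From mathcomp Require Import ring lra.
Import Order.TTheory GRing.Theory Num.Theory.
Local Open Scope ring_scope.
Local Open Scope complex_scope.
Section S.
Variable R : realType.
Variable A : set (R3 R).
Hypothesis mA : measurable A.
Notation mu := (@leb3 R).

Lemma cReM (a b : R[i]) : complex.Re (a * b) = complex.Re a * complex.Re b - complex.Im a * complex.Im b.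
Proof. by case: a; case: b. Qed.
Lemma cImM (a b : R[i]) : complex.Im (a * b) = complex.Re a * complex.Im b + complex.Im a * complex.Re b.
Proof. by case: a => x y; case: b => u v /=. Qed.
Lemma cReD (a b : R[i]) : complex.Re (a + b) = complex.Re a + complex.Re b.
Proof. by case: a; case: b. Qed.
Lemma cImD (a b : R[i]) : complex.Im (a + b) = complex.Im a + complex.Im b.
Proof. by case: a; case: b. Qed.
Lemma cReJ (a : R[i]) : complex.Re (Num.conj a) = complex.Re a.
Proof. by case: a. Qed.
Lemma cImJ (a : R[i]) : complex.Im (Num.conj a) = - complex.Im a.
Proof. by case: a. Qed.

Lemma Rint0 : Rintegral mu A (fun _ => 0) = 0.
Proof. by rewrite Rintegral_cst // mul0r. Qed.

Lemma Rint_sum (I : Type) (r : seq I) (f : I -> R3 R -> R) :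
  (forall i, mu.-integrable A (EFin \o f i)) ->
  Rintegral mu A (fun x => \sum_(i <- r) f i x) = \sum_(i <- r) Rintegral mu A (f i).
Proof.
move=> H; elim: r => [|i r IH].
  by under eq_Rintegral do rewrite big_nil; rewrite big_nil Rint0.
under eq_Rintegral do rewrite big_cons.
rewrite big_cons RintegralD // ?IH //.
apply: (@eq_integrable _ _ _ mu A mA (fun x => \sum_(j <- r) (f j x)%:E)).
  by move=> x _ /=; rewrite sumEFin.
apply: integrable_sum => [|j _]; last exact: H. exact mA.
Qed.

Lemma int_mul (p q F G : R3 R -> R) :
  measurable_fun A p -> measurable_fun A q ->
  mu.-integrable A (EFin \o F) -> mu.-integrable A (EFin \o G) ->
  (forall x, p x ^+ 2 <= F x) -> (forall x, q x ^+ 2 <= G x) ->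
  mu.-integrable A (EFin \o (fun x => p x * q x)).
Proof.
move=> mp mq iF iG hF hG.
apply: (@le_integrable _ _ _ mu A mA _ _ _ _ (@integrableD _ _ _ mu A mA _ _ iF iG)).
  by apply/measurable_EFinP; exact: measurable_funM.
move=> x _ /=; rewrite lee_fin.
have h1 := hF x; have h2 := hG x.
have n1 : `|p x| ^+ 2 = p x ^+ 2 by rewrite real_normK // num_real.
have n2 : `|q x| ^+ 2 = q x ^+ 2 by rewrite real_normK // num_real.
have a1 := normr_ge0 (p x); have a2 := normr_ge0 (q x).
rewrite normrM [`|F x + G x|]ger0_norm; last by nra.
nra.
Qed.

Lemma intD' (p q : R3 R -> R) : mu.-integrable A (EFin \o p) -> mu.-integrable A (EFin \o q) ->
  mu.-integrable A (EFin \o (fun x => p x + q x)).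
Proof.
move=> ip iq; apply: (@eq_integrable _ _ _ mu A mA _ _ _ (@integrableD _ _ _ mu A mA _ _ ip iq)).
by move=> x _ /=.
Qed.

Lemma intB' (p q : R3 R -> R) : mu.-integrable A (EFin \o p) -> mu.-integrable A (EFin \o q) ->
  mu.-integrable A (EFin \o (fun x => p x - q x)).
Proof.
move=> ip iq; apply: (@eq_integrable _ _ _ mu A mA _ _ _ (@integrableB _ _ _ mu A mA _ _ ip iq)).
by move=> x _ /=.
Qed.

Lemma intZ' (c : R) (p : R3 R -> R) : mu.-integrable A (EFin \o p) ->
  mu.-integrable A (EFin \o (fun x => c * p x)).
Proof.
move=> ip; apply: (@eq_integrable _ _ _ mu A mA _ _ _ (@integrableZl _ _ _ mu A mA c _ ip)).
by move=> x _ /=.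
Qed.

Definition cI (f : R3 R -> R[i]) :=
  mu.-integrable A (EFin \o (fun x => complex.Re (f x))) /\
  mu.-integrable A (EFin \o (fun x => complex.Im (f x))).

Lemma L2_prod f g : L2 A f -> L2 A g -> cI (fun x => Num.conj (f x) * g x).
Proof.
case=> [mRf [mIf iF]] [mRg [mIg iG]].
have bRf x : complex.Re (f x) ^+ 2 <= sqmod (f x).
  by rewrite /sqmod lerDl sqr_ge0.
have bIf x : complex.Im (f x) ^+ 2 <= sqmod (f x).
  by rewrite /sqmod lerDr sqr_ge0.
have bRg x : complex.Re (g x) ^+ 2 <= sqmod (g x).
  by rewrite /sqmod lerDl sqr_ge0.
have bIg x : complex.Im (g x) ^+ 2 <= sqmod (g x).
  by rewrite /sqmod lerDr sqr_ge0.
split.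
  have := intD' _ _ (int_mul _ _ _ _ mRf mRg iF iG bRf bRg) (int_mul _ _ _ _ mIf mIg iF iG bIf bIg).
  apply: (@eq_integrable _ _ _ mu A mA) => x _ /=.
  by rewrite cReM cReJ cImJ mulNr opprK.
have := intB' _ _ (int_mul _ _ _ _ mRf mIg iF iG bRf bIg) (int_mul _ _ _ _ mIf mRg iF iG bIf bRg).
apply: (@eq_integrable _ _ _ mu A mA) => x _ /=.
by rewrite cImM cReJ cImJ mulNr.
Qed.

Lemma cplx_eq (z v : R[i]) : complex.Re z = complex.Re v -> complex.Im z = complex.Im v -> z = v.
Proof. by case: z; case: v => a b c d /= -> ->. Qed.

Lemma Re_sum (I : Type) (r : seq I) (z : I -> R[i]) :
  complex.Re (\sum_(i <- r) z i) = \sum_(i <- r) complex.Re (z i).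
Proof. by elim: r => [|i r IH]; rewrite ?big_nil // !big_cons cReD IH. Qed.

Lemma Im_sum (I : Type) (r : seq I) (z : I -> R[i]) :
  complex.Im (\sum_(i <- r) z i) = \sum_(i <- r) complex.Im (z i).
Proof. by elim: r => [|i r IH]; rewrite ?big_nil // !big_cons cImD IH. Qed.

Lemma cint_sum (I : finType) (c : I -> R[i]) (F : I -> R3 R -> R[i]) :
  (forall i, cI (F i)) ->
  cint A (fun x => \sum_i c i * F i x) = \sum_i c i * cint A (F i).
Proof.
move=> H; apply: cplx_eq => /=.
  rewrite Re_sum; under eq_Rintegral do rewrite Re_sum.
  under eq_Rintegral do under eq_bigr do rewrite cReM.
  rewrite Rint_sum; last by move=> i; apply: intB'; apply: intZ'; case: (H i).
  apply: eq_bigr => i _; rewrite cReM /= RintegralB //; try by apply: intZ'; case: (H i).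
  by rewrite !RintegralZl //; case: (H i).
rewrite Im_sum; under eq_Rintegral do rewrite Im_sum.
under eq_Rintegral do under eq_bigr do rewrite cImM.
rewrite Rint_sum; last by move=> i; apply: intD'; apply: intZ'; case: (H i).
apply: eq_bigr => i _; rewrite cImM /= RintegralD //; try by apply: intZ'; case: (H i).
by rewrite !RintegralZl //; case: (H i).
Qed.


Lemma ipL2_sum (I J : finType) (c : I -> R[i]) (F : I -> R3 R -> R[i])
  (d : J -> R[i]) (G : J -> R3 R -> R[i]) :
  (forall i, L2 A (F i)) -> (forall j, L2 A (G j)) ->
  ipL2 A (fun x => \sum_i c i * F i x) (fun x => \sum_j d j * G j x) =
  \sum_i \sum_j (Num.conj (c i) * d j) * ipL2 A (F i) (G j).
Proof.
move=> HF HG; rewrite /ipL2.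
transitivity (cint A (fun x => \sum_(p : I * J)
   (Num.conj (c p.1) * d p.2) * (Num.conj (F p.1 x) * G p.2 x))).
  congr (cint A _); apply: funext => x.
  rewrite -(pair_bigA _ (fun i j => (Num.conj (c i) * d j) * (Num.conj (F i x) * G j x))) /= rmorph_sum big_distrl /=; apply: eq_bigr => i _.
  rewrite big_distrr /=; apply: eq_bigr => j _.
  by rewrite rmorphM /=; ring.
rewrite cint_sum; last by case=> i j; apply: L2_prod.
by rewrite -(pair_bigA _ (fun i j => (Num.conj (c i) * d j) * ipL2 A (F i) (G j))).
Qed.

Lemma ipL2C f g : L2 A f -> L2 A g -> ipL2 A g f = Num.conj (ipL2 A f g).
Proof.
move=> Hf Hg; have [_ iI] := L2_prod _ _ Hf Hg.
rewrite /ipL2 /cint; apply: cplx_eq => /=.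
  by apply: eq_Rintegral => x _; rewrite !cReM !cReJ !cImJ; ring.
rewrite -mulN1r -RintegralZl //; apply: eq_Rintegral => x _.
by rewrite !cImM !cReJ !cImJ; ring.
Qed.

Lemma sqnorm_ip f : sqnormL2 A f = complex.Re (ipL2 A f f).
Proof.
rewrite /sqnormL2 /ipL2 /cint /=; apply: eq_Rintegral => x _.
by rewrite cReM cReJ cImJ /sqmod; ring.
Qed.


Lemma conj_mul_sq (z : R[i]) : Num.conj z * z = (sqmod z)%:C.
Proof. by apply: cplx_eq; rewrite ?cReM ?cImM cReJ cImJ /sqmod /=; ring. Qed.

End S.

Section Mx.
Variable R : realType.
Lemma ctrmxM m n p (X : 'M[R[i]]_(m, n)) (Y : 'M[R[i]]_(n, p)) :
  ctrmx (X *m Y) = ctrmx Y *m ctrmx X.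
Proof. by rewrite /ctrmx trmx_mul map_mxM. Qed.
Lemma ctrmxK m n (X : 'M[R[i]]_(m, n)) : ctrmx (ctrmx X) = X.
Proof. by apply/matrixP => i j; rewrite !mxE conjCK. Qed.
Lemma ctrmx_diag n (d : 'I_n -> R) :
  ctrmx (diag_mx (\row_j (d j)%:C)) = diag_mx (\row_j (d j)%:C).
Proof.
apply/matrixP => i j; rewrite !mxE.
case: (eqVneq i j) => [->|nij]; last first.
  by rewrite !mulr0n conjC0.
by rewrite !mulr1n; apply: cplx_eq => //=; rewrite oppr0.
Qed.
End Mx.

Theorem lemma9 (R : realType) (A : set (R3 R)) (K : nat)
  (P : 'I_K -> R) (s2 : R) (h : 'I_K -> R3 R -> R[i]) (k : 'I_K)
  (U : 'M[R[i]]_K.-1) (lam : 'I_K.-1 -> R) (w : R3 R -> R[i]) :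
  measurable A ->
  (2 <= K)%N ->
  (forall j, 0 < P j) ->
  0 < s2 ->
  (forall j, L2 A (h j)) ->
  (forall x : 'cV[R[i]]_K, x != 0 -> 0 < (ctrmx x *m gram A h *m x) 0 0) ->
  U \is unitarymx ->
  (forall j, 0 < lam j) ->
  Ck A P s2 h k = U *m diag_mx (\row_j (lam j)%:C) *m ctrmx U ->
  L2 A w ->
  fdm A P s2 h k w = sqnormL2 A (uk A P s2 h k U lam w).
Proof.
move=> mA K2 Ppos s2pos hL2 _ Uu lampos HC wL2.
pose hh j := h (lift k j).
pose a : 'cV[R[i]]_K.-1 := \col_j ipL2 A (hh j) w.
pose Pk := Pkhalf P s2 k.
pose B := Bk U lam.
pose M := Pk *m B *m Pk.
pose c := M *m a.
have hhL2 j : L2 A (hh j) by exact: hL2.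
have Hu : uk A P s2 h k U lam w = fun r => w r - \sum_j c j 0 * hh j r.
  apply: funext => r; rewrite /uk; congr (_ - _).
  transitivity (cint A (fun r' => \sum_l ((hmk h k r *m M) 0 l) * (Num.conj (hh l r') * w r'))).
    congr (cint A _); apply: funext => r'.
    rewrite /Bk_fr /M !mulmxA mxE big_distrl; apply: eq_bigr => l _ /=.
    rewrite -mulrA; congr (_ * (_ * _)); by rewrite /ctrmx /hmk !mxE.
  rewrite cint_sum //; last by move=> l; apply: L2_prod.
  transitivity ((hmk h k r *m M *m a) 0 0).
    by rewrite [RHS]mxE; apply: eq_bigr => l _; rewrite [a _ _]mxE.
  rewrite -mulmxA [LHS]mxE; apply: eq_bigr => j _; rewrite mulrC; congr (_ * _); by rewrite mxE.
have UUH : U *m ctrmx U = 1%:M by move/unitarymxP: Uu.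
have UHU : ctrmx U *m U = 1%:M by apply: mulmx1C.
pose e := \row_j ((1 + Num.sqrt (1 + lam j)) / lam j)%:C.
pose D := \row_j (lam j)%:C.
have HB : B = U *m diag_mx e *m ctrmx U by [].
have HPk : ctrmx Pk = Pk by rewrite /Pk /Pkhalf ctrmx_diag.
have HBh : ctrmx B = B.
  by rewrite HB !ctrmxM ctrmxK ctrmx_diag mulmxA.
have HM : ctrmx M = M by rewrite /M (@ctrmxM _ _ _ _ (Pk *m B) Pk) (@ctrmxM _ _ _ _ Pk B) HBh HPk mulmxA.
have key : B *m Ck A P s2 h k *m B - B - B = 1%:M.
  have -> : B *m Ck A P s2 h k *m B = U *m (diag_mx e *m diag_mx D *m diag_mx e) *m ctrmx U.
    rewrite HC HB !mulmxA -[_ *m ctrmx U *m U]mulmxA UHU mulmx1.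
    by rewrite -[_ *m ctrmx U *m U]mulmxA UHU mulmx1.
  rewrite HB -!mulmxBl -!mulmxBr -UUH; congr (_ *m _).
  rewrite -[RHS]mulmx1; congr (_ *m _).
  rewrite !mulmx_diag; apply/matrixP => i j; rewrite !mxE.
  case: (eqVneq i j) => [->|nij]; last by rewrite !mulr0n !subr0.
  rewrite !mulr1n -!rmorphM -!rmorphB /=; congr (_%:C).
  have l0 : lam j != 0 by rewrite gt_eqF.
  have hs : Num.sqrt (1 + lam j) ^+ 2 = 1 + lam j.
    by rewrite sqr_sqrtr // addr_ge0 // ltW.
  set s := Num.sqrt (1 + lam j) in hs *.
  rewrite [(1 + s) / lam j * lam j]mulfVK // mulrA -!mulrBl.
  have -> : (1 + s) * (1 + s) - (1 + s) - (1 + s) = lam j by nra.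
  by rewrite divff.
have HMM : M *m Rk A h k *m M - M - M = Pk *m Pk.
  transitivity (Pk *m (B *m Ck A P s2 h k *m B - B - B) *m Pk); last by rewrite key mulmx1.
  by rewrite /M /Ck !mulmxBr !mulmxBl !mulmxA.
pose Fam (i : 'I_K.-1.+1) : R3 R -> R[i] := oapp hh w (unlift ord0 i).
pose dd (i : 'I_K.-1.+1) : R[i] := oapp (fun j => - c j 0) 1 (unlift ord0 i).
have Fam0 : Fam ord0 = w by rewrite /Fam unlift_none.
have dd0 : dd ord0 = 1 by rewrite /dd unlift_none.
have Faml j : Fam (lift ord0 j) = hh j by rewrite /Fam liftK.
have ddl j : dd (lift ord0 j) = - c j 0 by rewrite /dd liftK.
have FamL2 i : L2 A (Fam i) by rewrite /Fam; case: (unlift ord0 i) => [j|] /=.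
have Hg : (fun r => w r - \sum_j c j 0 * hh j r) = (fun r => \sum_i dd i * Fam i r).
  apply: funext => r; rewrite big_ord_recl dd0 Fam0 mul1r -sumrN.
  by congr (_ + _); apply: eq_bigr => j _; rewrite ddl Faml mulNr.
rewrite Hu Hg sqnorm_ip ipL2_sum //.
rewrite big_ord_recl big_ord_recl dd0 Fam0.
under eq_bigr => l _ do rewrite ddl Faml.
rewrite [X in _ + X](eq_bigr (fun i => Num.conj (- c i 0) * ipL2 A (hh i) w +
   \sum_l Num.conj (- c i 0) * - c l 0 * ipL2 A (hh i) (hh l))); last first.
  move=> i _; rewrite big_ord_recl ddl Faml dd0 Fam0 mulr1; congr (_ + _).
  by apply: eq_bigr => l _; rewrite ddl Faml.
rewrite conjC1 !mul1r -!addrA cReD -sqnorm_ip.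
have aE l : a l 0 = ipL2 A (hh l) w by rewrite mxE.
have cE : c = M *m a by [].
have E00 (X Y : 'M[R[i]]_1) : (X - Y) 0 0 = X 0 0 - Y 0 0 by rewrite !mxE.
clearbody c a M.
have e1 : \sum_l 1 * - c l 0 * ipL2 A w (hh l) = - (ctrmx a *m c) 0 0.
  rewrite mxE -sumrN; apply: eq_bigr => l _.
  by rewrite (ipL2C _ _ mA _ _ (hhL2 l) wL2) mul1r !mxE aE mulNr mulrC.
have e2 : \sum_i Num.conj (- c i 0) * ipL2 A (hh i) w = - (ctrmx c *m a) 0 0.
  rewrite mxE -sumrN; apply: eq_bigr => i _.
  by rewrite !mxE aE rmorphN mulNr.
have e3 : \sum_i \sum_l Num.conj (- c i 0) * - c l 0 * ipL2 A (hh i) (hh l) =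
    (ctrmx c *m (Rk A h k *m c)) 0 0.
  rewrite mxE; apply: eq_bigr => i _; rewrite [(Rk A h k *m c) i 0]mxE big_distrr.
  apply: eq_bigr => l _.
  by rewrite !mxE rmorphN /= mulrNN -mulrA; congr (_ * _); exact: mulrC.
rewrite big_split /= e1 e2 e3.
have e4 : ctrmx c *m (Rk A h k *m c) - ctrmx a *m c - ctrmx c *m a =
    ctrmx a *m (Pk *m Pk) *m a.
  by rewrite -HMM cE ctrmxM HM !mulmxBr !mulmxBl !mulmxA.
have e5 : - (ctrmx a *m c) 0 0 + (- (ctrmx c *m a) 0 0 + (ctrmx c *m (Rk A h k *m c)) 0 0) =
   (ctrmx a *m (Pk *m Pk) *m a) 0 0.
  by rewrite -e4 !E00; ring.
rewrite e5 /fdm; congr (_ + _).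
have -> : (ctrmx a *m (Pk *m Pk) *m a) 0 0 =
    (\sum_j P (lift k j) / s2 * sqmod (a j 0))%:C.
  rewrite mxE rmorph_sum; apply: eq_bigr => j _.
  rewrite /Pk /Pkhalf mulmx_diag mul_mx_diag !mxE /=.
  have p0 : 0 <= P (lift k j) / s2 by rewrite divr_ge0 // ltW.
  rewrite -rmorphM -expr2 sqr_sqrtr // mulrAC conj_mul_sq -rmorphM mulrC.
  by rewrite aE.
rewrite /=.
under [RHS]eq_bigr do rewrite aE.
pose F (i : 'I_K) := P i / s2 * sqmod (ipL2 A (h i) w).
apply: (addrI (F k)).
rewrite -(bigD1 k (P := predT) (F := F)) //.
by rewrite (bigD1_ord k (P := predT) (F := F)).
Qed.
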